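(* Let $k\ge 3$ and $n_1=\cdots=n_k\ge 2$. The number of distinct isomorphism classes of graphs in the LC orbit $\mathcal{O}(K_{n_1,\dots,n_k})$ is $\lfloor k/2\rfloor+k+1$.
   Context: $K_{n_1,\dots,n_k}$ is the complete $k$-partite graph with parts of sizes $n_1,\dots,n_k$. The local complement $c_v(G)$ complements the edges among the neighbours of $v$; $\mathcal{O}(G)$ is the set of all graphs on the labelled vertex set $V(G)$ obtainable from $G$ by finite sequences of local complements. *)

(* Defs.v *)
From mathcomp Require Import all_boot fingroup perm.
Set Implicit Arguments. Unset Strict Implicit. Unset Printing Implicit Defensive.

Definition graph (V : finType) := {set V * V}.

Definition simple_graph (V : finType) (G : graph V) : bool :=
  [forall x : V, forall y : V, ((x, y) \in G) == ((y, x) \in G)] &&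
  [forall x : V, (x, x) \notin G].

Definition nbhd (V : finType) (G : graph V) (v : V) : {set V} :=
  [set u | (v, u) \in G].

Definition local_complement (V : finType) (v : V) (G : graph V) : graph V :=
  [set p : V * V |
     if [&& p.1 \in nbhd G v, p.2 \in nbhd G v & p.1 != p.2]
     then p \notin G else p \in G].

Definition lc_step (V : finType) : rel (graph V) :=
  fun G H => [exists v : V, H == local_complement v G].

Definition lc_orbit (V : finType) (G : graph V) : {set graph V} :=
  [set H | connect (@lc_step V) G H].

Definition graph_iso (V : finType) (G H : graph V) : bool :=
  [exists s : {perm V},
     [forall x : V, forall y : V, ((x, y) \in G) == ((s x, s y) \in H)]].

(* the set of isomorphism classes of graphs in a family S (each class
   represented by its intersection with S) *)
Definition iso_classes (V : finType) (S : {set graph V}) : {set {set graph V}} :=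
  [set [set H' in S | graph_iso H H'] | H in S].

(* complete k-partite graph K_{n,...,n}: vertex (i, a) is the a-th vertex of part i *)
Definition complete_multipartite (k n : nat) : graph ('I_k * 'I_n)%type :=
  [set p : (('I_k * 'I_n) * ('I_k * 'I_n))%type | p.1.1 != p.2.1].

(* Main.v *)
Require Import Defs.
From mathcomp Require Import all_boot fingroup perm zify.
Set Implicit Arguments. Unset Strict Implicit. Unset Printing Implicit Defensive.

Section Gen.
Variable V : finType.
Implicit Types G H K : graph V.

Lemma isoP G H : reflect (exists s : {perm V}, forall x y, ((x, y) \in G) = ((s x, s y) \in H)) (graph_iso G H).
Proof.
apply: (iffP existsP) => [[s /forallP hs]|[s hs]]; exists s.
- by move=> x y; have /forallP/(_ y)/eqP := hs x.
- by apply/forallP => x; apply/forallP => y; rewrite hs.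
Qed.

Lemma iso_refl G : graph_iso G G.
Proof. by apply/isoP; exists 1%g => x y; rewrite !perm1. Qed.

Lemma iso_sym G H : graph_iso G H -> graph_iso H G.
Proof.
case/isoP => s hs; apply/isoP; exists s^-1%g => x y.
by rewrite hs !permKV.
Qed.

Lemma iso_trans G H K : graph_iso G H -> graph_iso H K -> graph_iso G K.
Proof.
case/isoP => s hs /isoP [u hu]; apply/isoP; exists (s * u)%g => x y.
by rewrite hs hu !permM.
Qed.

Definition pend G := #|[set x | #|nbhd G x| == 1]|.
Definition tw G := [exists x, exists y, [&& x != y, (x, y) \in G &
   [forall z, ((z == x) || ((x, z) \in G)) == ((z == y) || ((y, z) \in G))]]].
Definition tri G := [exists x, exists y, exists z, [&& (x, y) \in G, (y, z) \in G & (x, z) \in G]].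

Lemma nbhd_iso (s : {perm V}) G H : (forall x y, ((x, y) \in G) = ((s x, s y) \in H)) ->
  forall x, nbhd H (s x) = s @: nbhd G x.
Proof.
move=> hs x; apply/setP => y; rewrite -[y](permKV s) mem_imset; last exact: perm_inj.
by rewrite !inE hs.
Qed.

Lemma pend_iso G H : graph_iso G H -> pend G = pend H.
Proof.
case/isoP => s hs; rewrite /pend.
have -> : [set x | #|nbhd H x| == 1] = s @: [set x | #|nbhd G x| == 1].
  apply/setP => y; rewrite -[y](permKV s) mem_imset; last exact: perm_inj.
  by rewrite !inE (nbhd_iso hs) card_imset //; apply: perm_inj.
by rewrite card_imset //; apply: perm_inj.
Qed.

Lemma tw_iso1 G H : graph_iso G H -> tw G -> tw H.
Proof.
case/isoP => s hs /existsP [x /existsP [y /and3P [nxy axy /forallP hz]]].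
apply/existsP; exists (s x); apply/existsP; exists (s y).
rewrite -hs axy (inj_eq (@perm_inj _ s)) nxy /=; apply/forallP => z.
by rewrite -[z](permKV s) -!hs !(inj_eq (@perm_inj _ s)); apply: hz.
Qed.

Lemma tri_iso1 G H : graph_iso G H -> tri G -> tri H.
Proof.
case/isoP => s hs /existsP [x /existsP [y /existsP [z /and3P [h1 h2 h3]]]].
apply/existsP; exists (s x); apply/existsP; exists (s y); apply/existsP; exists (s z).
by rewrite -!hs h1 h2 h3.
Qed.

Definition inv G := (pend G, tw G, tri G).

Lemma inv_iso G H : graph_iso G H -> inv G = inv H.
Proof.
move=> h; have h' := iso_sym h; rewrite /inv (pend_iso h).
congr (_, _, _).
- by apply/idP/idP; [apply: tw_iso1 h | apply: tw_iso1 h'].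
- by apply/idP/idP; [apply: tri_iso1 h | apply: tri_iso1 h'].
Qed.

Lemma count_classes (S : {set graph V}) (I : finType) (R : I -> graph V) :
  (forall i, R i \in S) ->
  (forall i j, graph_iso (R i) (R j) -> i = j) ->
  (forall H, H \in S -> exists i, graph_iso H (R i)) ->
  #|iso_classes S| = #|I|.
Proof.
move=> RS Rinj Rcov.
pose cls H := [set H' in S | graph_iso H H'].
have clsE G H : graph_iso G H -> cls G = cls H.
  move=> gh; apply/setP => K; rewrite !inE; case: (K \in S) => //=.
  apply/idP/idP => h; [exact: iso_trans (iso_sym gh) h | exact: iso_trans gh h].
have -> : iso_classes S = (fun i => cls (R i)) @: [set: I].
  apply/setP => C; apply/imsetP/imsetP => [[H HS ->]|[i _ ->]].
  - by have [i hi] := Rcov H HS; exists i; rewrite ?inE //; exact: clsE hi.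
  - by exists (R i).
rewrite card_imset ?cardsT // => i j e.
apply: Rinj; have : R j \in cls (R j) by rewrite inE RS iso_refl.
by rewrite -e inE => /andP [].
Qed.
End Gen.


Lemma perm_set (T : finType) (X Y : {set T}) : #|X| = #|Y| ->
  exists pi : {perm T}, (forall i, (pi i \in Y) = (i \in X)) /\
                        (forall i, i \notin X -> i \notin Y -> pi i = i).
Proof.
move e: #|X :\: Y| => m; elim: m X e => [|m IH] X e hXY.
- have sXY : X \subset Y by rewrite -setD_eq0 -cards_eq0 e.
  have eXY : X = Y by apply/eqP; rewrite eqEcard sXY hXY leqnn.
  by subst Y; exists 1%g; split => i; rewrite perm1.
- have [a aXY] : exists a, a \in X :\: Y.
    by apply/set0Pn; rewrite -card_gt0 e.
  have eYX : #|Y :\: X| = m.+1.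
    by move: hXY e; rewrite -(cardsID Y X) -(cardsID X Y) setIC; lia.
  have [b bYX] : exists b, b \in Y :\: X.
    by apply/set0Pn; rewrite -card_gt0 eYX.
  move: aXY bYX; rewrite !inE => /andP [aY aX] /andP [bX bY].
  pose X' := tperm a b @: X.
  have mX' z : (z \in X') = (tperm a b z \in X).
    by rewrite -{1}[z](tpermK a b) mem_imset //; apply: perm_inj.
  have ab : a != b by apply: contraNneq aY => ->.
  have e' : #|X' :\: Y| = m.
    have -> : X' :\: Y = (X :\: Y) :\ a.
      apply/setP => z; rewrite !inE mX'.
      case: (tpermP a b z) => [->|->|za zb]; rewrite ?eqxx ?aY ?bY ?bX ?andbF //=.
      - by rewrite (negbTE bX).
      - by rewrite (introN eqP za).
    by move: e; rewrite (cardsD1 a (X :\: Y)) !inE aY aX /=; lia.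
  have hX' : #|X'| = #|Y| by rewrite card_imset ?hXY //; apply: perm_inj.
  have [pi' [h1 h2]] := IH X' e' hX'.
  exists (tperm a b * pi')%g; split => i.
  + by rewrite permM h1 mX' tpermK.
  + move=> iX iY; have ia : i != a by apply: contraNneq iX => ->.
    have ib : i != b by apply: contraNneq iY => ->.
    rewrite permM tpermD 1?eq_sym //; apply: h2 => //.
    by rewrite mX' tpermD 1?eq_sym.
Qed.

Inductive ty := TA | TB | TC.
Definition isA t := if t is TA then true else false.
Definition isB t := if t is TB then true else false.
Definition isC t := if t is TC then true else false.
Definition swapAB t := match t with TA => TB | TB => TA | TC => TC end.

Section Fam.
Variables k n : nat.
Notation V := ('I_k * 'I_n)%type.
Record par := Par { pq : option 'I_k; pt : 'I_k -> ty; pc : 'I_k -> 'I_n }.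

Definition act p (x : V) := if pt p x.1 is TC then x.2 == pc p x.1 else true.
Definition qadj p (i j : 'I_k) := if pq p is Some s then (i == s) || (j == s) else true.
Definition intra p (i : 'I_k) (a b : 'I_n) :=
  match pt p i with TA => false | TB => true | TC => (a == pc p i) || (b == pc p i) end.
Definition adj p (x y : V) :=
  if x.1 == y.1 then (x.2 != y.2) && intra p x.1 x.2 y.2
  else [&& qadj p x.1 y.1, act p x & act p y].
Definition FG p : graph V := [set e | adj p e.1 e.2].

Definition step p (v : V) : par :=
  let l := v.1 in let d := v.2 in
  match pq p with
  | None => if isA (pt p l) || (d == pc p l) then
      Par (Some l) (fun j => if j == l then (if pt p l is TA then TA else TB) else swapAB (pt p j)) (pc p)
      else p
  | Some s => if l == s then
      Par None (fun j => if j == s then (if pt p s is TA then TA else TC) else swapAB (pt p j))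
          (fun j => if j == s then d else pc p j)
      else if isB (pt p l) || (d == pc p l) then
      Par (Some s) (fun j => if j == l then (if pt p l is TB then TC else TB)
                             else if j == s then swapAB (pt p j) else pt p j)
          (fun j => if j == l then d else pc p j)
      else p
  end.

Definition validS p : Prop := match pq p with
  | None => forall i, ~~ isB (pt p i)
  | Some s => ~~ isC (pt p s) /\ forall j, j != s -> ~~ isA (pt p j) end.

Ltac phase1 :=
  repeat (match goal with
  | |- context [?a == ?b] => let T := type of a in unify T ('I_k);
      case: (a =P b) => [?|?]; subst
  end; rewrite /= ?eqxx ?andbF ?andbT ?orbF ?orbT //=).
Ltac phase2 :=
  repeat (match goal with
  | |- context [?f ?i] => match type of f with _ -> ty => case: (f i) end
  end; rewrite /= ?eqxx ?andbF ?andbT ?orbF ?orbT //=).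
Ltac phase3 :=
  repeat (match goal with
  | |- context [?a == ?b] => let T := type of a in
      tryif unify T bool then fail else
      case: (a =P b) => [?|?]; subst
  end; rewrite /= ?eqxx ?andbF ?andbT ?orbF ?orbT //=); intros;
  repeat match goal with
  | H : true = (?a == ?b) |- _ => move: H => /esym /eqP H
  | H : is_true (?a == ?b) |- _ => move/eqP: H => H
  | H : false = (?a == ?b) |- _ => move: H => /esym /negbT /eqP H
  | H : (?a == ?b) = false |- _ => move: H => /negbT /eqP H
  | H : (?a != ?b) = false |- _ => move: H => /negbFE /eqP H
  | H : false = (?a != ?b) |- _ => move: H => /esym /negbFE /eqP H
  | H : true = (?a != ?b) |- _ => move: H => /esym /eqP H
  | H : is_true (?a != ?b) |- _ => move: H => /eqP H
  end; try congruence;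
  repeat match goal with H : is_true true -> is_true false |- _ => by have := H isT end.
Ltac brute := phase1; phase2; phase3.

Lemma lc_FG p v : validS p -> local_complement v (FG p) = FG (step p v).
Proof.
case: p => q t c; case: v => l d; rewrite /validS /=.
move=> hv; apply/setP => -[[i a] [j b]].
rewrite /local_complement /FG /nbhd !inE /= xpair_eqE.
case: q hv => [s [hs ht]|hv] /=.
- have hi := ht i; have hj := ht j; have hl := ht l.
  rewrite /step /=.
  case: (l =P s) => [->|nls].
  + rewrite /adj /act /qadj /intra /= eqxx.
    move: hs hi hj; case E: (t s) => //= _; move: E.
    * brute.
    * brute.
  + rewrite /adj /act /qadj /intra /=.
    have nls2 : l != s by apply/eqP.
    have {}hl := hl nls2.
    move: hl hi hj hs; case E: (t l) => //= _; move: E.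
    * brute.
    * case: (d =P c l) => [->|ndc] /=; rewrite ?eqxx /=; brute.
- have hi := hv i; have hj := hv j; have hl := hv l.
  rewrite /step /=.
  rewrite /adj /act /qadj /intra /=.
  move: hl hi hj; case E: (t l) => //= _; move: E.
  * brute.
  * case: (d =P c l) => [->|ndc] /=; rewrite ?eqxx /=; brute.
Qed.

Definition cntC (t : 'I_k -> ty) := #|[set i | isC (t i)]|.

Lemma cnt_upd (t t' : 'I_k -> ty) l : (forall j, j != l -> isC (t' j) = isC (t j)) ->
  cntC t' + isC (t l) = cntC t + isC (t' l).
Proof.
move=> h; rewrite /cntC (cardsD1 l [set i | isC (t i)]) (cardsD1 l [set i | isC (t' i)]) !inE.
have -> : [set i | isC (t' i)] :\ l = [set i | isC (t i)] :\ l.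
  by apply/setP => j; rewrite !inE; case: (j =P l) => [->|/eqP nj] //=; rewrite h.
lia.
Qed.

Lemma cnt_odd (t t' : 'I_k -> ty) l : (forall j, j != l -> isC (t' j) = isC (t j)) ->
  odd (cntC t') = odd (cntC t) (+) isC (t l) (+) isC (t' l).
Proof.
move=> /cnt_upd e; have := congr1 odd e; rewrite !oddD.
by case: (odd (cntC t')); case: (odd (cntC t)); case: (isC (t l)); case: (isC (t' l)).
Qed.

Definition par_ok p := match pq p with
  | None => ~~ odd (cntC (pt p))
  | Some s => ~~ odd (cntC (pt p) + isB (pt p s)) end.

Definition valid p := validS p /\ par_ok p.

Lemma valid_step p v : valid p -> valid (step p v).
Proof.
case: p => q t c; case: v => l d; rewrite /valid /validS /par_ok /step /=.
case: q => [s [[hs ht] hp]|[hv hp]] /=.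
- case: (l =P s) => [els|nls] /=; first subst l.
  + split.
    * by move=> j; case: (j =P s) => [_|/eqP js] /=;
        [case: (t s) hs | have := ht j js; case: (t j)].
    * rewrite (@cnt_odd t _ s) /= ?eqxx; last by move=> j /negbTE /= ->; case: (t j).
      by move: hp hs; rewrite oddD; case: (t s); case: (odd (cntC t)).
  + have /ht htl : l != s by apply/eqP.
    have sl : (s == l) = false by apply/eqP => e; apply: nls.
    case hB: (isB (t l) || (d == c l)) => /=; last by split.
    split.
    * rewrite eqxx sl; split; first by case: (t s) hs.
      move=> j js; case: (j =P l) => [_|_] /=; first by case: (t l).
      by rewrite (negbTE js); apply: ht.
    * rewrite oddD (@cnt_odd t _ l) /= ?eqxx ?sl; last first.
        by move=> j /negbTE /= ->; case: (j == s) => //; case: (t j).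
      by move: hp hs htl hB; rewrite oddD; case: (t s); case: (t l); case: (odd (cntC t)).
- case hB: (isA (t l) || (d == c l)) => /=; last by split.
  split.
  + rewrite eqxx; split; first by case: (t l) (hv l).
    by move=> j /negbTE ->; move: (hv j); case: (t j).
  + rewrite oddD (@cnt_odd t _ l) /= ?eqxx; last by move=> j /negbTE /= ->; case: (t j).
    by move: hp (hv l) hB; case: (t l); case: (odd (cntC t)).
Qed.

Lemma FG_ext p p' : pq p = pq p' -> (forall i, pt p i = pt p' i) ->
  (forall i, isC (pt p i) -> pc p i = pc p' i) -> FG p = FG p'.
Proof.
case: p => q t c; case: p' => q' t' c' /= -> ht hc.
apply/setP => -[[i a] [j b]]; rewrite !inE /adj /act /qadj /intra /= !ht.
have hci := hc i; have hcj := hc j; rewrite !ht in hci hcj.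
by case: (t' i) hci => [_|_|/(_ isT) ->]; case: (t' j) hcj => [_|_|/(_ isT) ->].
Qed.

Definition p0 (c0 : 'I_k -> 'I_n) := Par None (fun _ => TA) c0.

Lemma FG_p0 c0 : complete_multipartite k n = FG (p0 c0).
Proof. by apply/setP => -[[i a] [j b]]; rewrite /complete_multipartite /FG !inE /adj /=; case: (i == j); rewrite ?andbF. Qed.

Lemma cntC0 : cntC (fun _ => TA) = 0.
Proof. by apply/eqP; rewrite cards_eq0; apply/eqP/setP => i; rewrite !inE. Qed.

Lemma valid_p0 c0 : valid (p0 c0).
Proof. split; first by []. by rewrite /par_ok /= cntC0. Qed.

Lemma orbit_fam p H : valid p -> H \in lc_orbit (FG p) -> exists p', valid p' /\ H = FG p'.
Proof.
rewrite inE => vp /connectP [s hs ->].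
elim: s p vp hs => [|G s IH] p vp /=; first by exists p.
case/andP => /existsP [v /eqP ->] hs.
rewrite (lc_FG _ vp.1) in hs *.
exact: IH (valid_step v vp) hs.
Qed.

Lemma orbit_step (G H : graph V) v : H \in lc_orbit G -> local_complement v H \in lc_orbit G.
Proof.
rewrite !inE => h; apply: connect_trans h (connect1 _).
by apply/existsP; exists v.
Qed.

Lemma two_other (i : 'I_k) : 2 < k -> exists j1 j2 : 'I_k, [/\ j1 != i, j2 != i & j1 != j2].
Proof.
move=> hk.
have h0 : 0 < k by lia. have h1 : 1 < k by lia.
pose o0 := Ordinal h0; pose o1 := Ordinal h1; pose o2 := Ordinal hk.
case: (i =P o0) => [->|n0]; first by exists o1, o2.
case: (i =P o1) => [->|n1]; first by exists o0, o2.
exists o0, o1; split => //; apply/eqP => e; [exact: n0 | exact: n1].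
Qed.

Lemma other_el (a : 'I_n) : 1 < n -> exists a', a' != a.
Proof.
move=> hn; have h0 : 0 < n by lia.
case: (a =P Ordinal h0) => [->|na]; first by exists (Ordinal hn).
by exists (Ordinal h0); apply/eqP => e; apply: na.
Qed.

Lemma card_pend (t : 'I_k -> ty) (c : 'I_k -> 'I_n) :
  #|[set x : V | isC (t x.1) && (x.2 != c x.1)]| = cntC t * n.-1.
Proof.
rewrite -sum1dep_card big_mkcond /=.
rewrite -(pair_bigA _ (fun i a => if isC (t i) && (a != c i) then 1 else 0)) /=.
rewrite /cntC -sum1dep_card big_distrl /= [RHS]big_mkcond /=.
apply: eq_bigr => i _; case: (isC (t i)) => /=; last by rewrite big1.
rewrite mul1n -big_mkcond /= sum1dep_card -[n in n.-1]card_ord -(cardsC1 (c i)).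
by apply: eq_card => a; rewrite !inE.
Qed.

Lemma pend_FG p : validS p -> 2 < k -> 1 < n -> pend (FG p) = cntC (pt p) * n.-1.
Proof.
case: p => q t c hv hk hn; rewrite /pend -(card_pend t c) /=.
apply: eq_card => -[i a]; rewrite !inE /=.
case E: (isC (t i) && (a != c i)).
- have -> : nbhd (FG (Par q t c)) (i, a) = [set (i, c i)].
    apply/setP => -[j b]; rewrite !inE /adj /act /qadj /intra /= xpair_eqE.
    move: E; brute.
  by rewrite cards1.
- apply: negbTE; rewrite neq_ltn; apply/orP; right; apply/card_gt1P.
  case: q hv => [s [hs ht]|hv].
  + case: (i =P s) => [eis|nis].
    * subst i; have [j1 [j2 [h1 h2 h12]]] := two_other s hk.
      exists (j1, c j1), (j2, c j2); rewrite !inE /adj /act /qadj /intra /= xpair_eqE.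
      by split; move: hs h1 h2 h12; brute.
    * have [a' na'] := other_el a hn.
      exists (s, a), (s, a'); rewrite !inE /adj /act /qadj /intra /= xpair_eqE.
      by split; move: E hs na'; brute.
  + have [j1 [j2 [h1 h2 h12]]] := two_other i hk.
    have hvi := hv i.
    exists (j1, c j1), (j2, c j2); rewrite !inE /adj /act /qadj /intra /= xpair_eqE.
    by split; move: E hvi h1 h2 h12; brute.
Qed.

Lemma K_twtri p : pq p = None -> validS p -> 2 < k -> 1 < n ->
  tw (FG p) = false /\ tri (FG p).
Proof.
case: p => q t c /= -> hv hk hn; rewrite /validS /= in hv.
split.
- apply: negbTE; apply/negP; rewrite /tw => /existsP [[i a] /existsP [[j b] /and3P [nxy axy /forallP hz]]].
  move: nxy axy; rewrite !inE /= xpair_eqE => nxy axy.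
  have hvi := hv i; have hvj := hv j.
  case: (i =P j) => [eij|nij].
  + subst j; have [j1 [j2 [h1 h2 h12]]] := two_other i hk.
    have := hz (j1, c j1); have hv1 := hv j1.
    rewrite !inE /adj /act /qadj /intra /= !xpair_eqE.
    move: nxy axy hvi hv1 h1; rewrite /adj /act /qadj /intra /=; brute.
  + have [a' na'] := other_el a hn.
    have := hz (i, a').
    rewrite !inE /adj /act /qadj /intra /= !xpair_eqE.
    have nij' : i != j by apply/eqP.
    move: nxy axy hvi hvj na' nij'; rewrite /adj /act /qadj /intra /=; brute.
- have h0 : 0 < k by lia.
  have [j1 [j2 [h1 h2 h12]]] := two_other (Ordinal h0) hk.
  rewrite /tri; apply/existsP; exists (Ordinal h0, c (Ordinal h0)).
  apply/existsP; exists (j1, c j1); apply/existsP; exists (j2, c j2).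
  rewrite !inE /adj /act /qadj /intra /=.
  have hv0 := hv (Ordinal h0); have hv1 := hv j1; have hv2 := hv j2.
  move: h1 h2 h12 hv0 hv1 hv2; brute.
Qed.

Ltac unf := rewrite /adj /act /qadj /intra /=.

Lemma S_twtri p s : pq p = Some s -> validS p -> 2 < k -> 1 < n ->
  tw (FG p) = [exists i, isB (pt p i)] /\ tri (FG p) = [exists i, isB (pt p i)].
Proof.
case: p => q t c /= -> [hs ht] hk hn.
have h0n : 0 < n by lia.
pose e0 := Ordinal h0n; have [e1 ne1] := other_el e0 hn.
case: (boolP [exists i, isB (t i)]) => [/existsP [i hi]|nB].
- suff [-> ->] : tw (FG (Par (Some s) t c)) /\ tri (FG (Par (Some s) t c)) by [].
  case: (i =P s) => [eis|nis].
  + subst i; split.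
    * rewrite /tw; apply/existsP; exists (s, e1); apply/existsP; exists (s, e0).
      rewrite !inE xpair_eqE /=; apply/and3P; split.
      - by rewrite eqxx (negbTE ne1).
      - by unf; move: hi ne1; brute.
      - apply/forallP => -[j b]; rewrite !inE !xpair_eqE /=; unf.
        have htj := ht j; move: hi hs htj ne1; brute.
    * rewrite /tri; have [j1 [_ [h1 _ _]]] := two_other s hk.
      apply/existsP; exists (s, e1); apply/existsP; exists (s, e0); apply/existsP; exists (j1, c j1).
      rewrite !inE /=; unf; have := ht j1; move: hi ne1 h1; brute.
  + have nis' : i != s by apply/eqP.
    split.
    * rewrite /tw; apply/existsP; exists (i, e1); apply/existsP; exists (i, e0).
      rewrite !inE xpair_eqE /=; apply/and3P; split.
      - by rewrite eqxx (negbTE ne1).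
      - by unf; move: hi ne1; brute.
      - apply/forallP => -[j b]; rewrite !inE !xpair_eqE /=; unf.
        have htj := ht j; move: hi hs htj ne1 nis'; brute.
    * rewrite /tri.
      apply/existsP; exists (i, e1); apply/existsP; exists (i, e0); apply/existsP; exists (s, e0).
      rewrite !inE /=; unf; move: hi ne1 hs nis'; brute.
- have hB : forall i, ~~ isB (t i).
    by move=> i; apply: contra nB => hi; apply/existsP; exists i.
  split.
  + apply: negbTE; apply/negP; rewrite /tw => /existsP [[i a] /existsP [[j b] /and3P [nxy axy /forallP hz]]].
    move: nxy axy; rewrite !inE /= xpair_eqE => nxy axy.
    have hBi := hB i; have hBj := hB j; have hti := ht i; have htj := ht j; have hBs := hB s.
    case: (i =P j) => [eij|nij].
    * subst j; have := hz (s, a); rewrite !inE !xpair_eqE /=.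
      move: nxy axy hBi hti hs hBs; unf; brute.
    * have nij' : i != j by apply/eqP.
      case: (i =P s) => [eis|nis].
      - subst i; have [b' nb'] := other_el b hn.
        have := hz (j, b'); rewrite !inE !xpair_eqE /=.
        move: nxy axy hBj htj hs hBs nb' nij'; unf; brute.
      - have nis' : i != s by apply/eqP.
        have [a' na'] := other_el a hn.
        have := hz (i, a'); rewrite !inE !xpair_eqE /=.
        move: nxy axy hBi hBj hti htj hs hBs na' nij' nis'; unf; brute.
  + apply: negbTE; apply/negP; rewrite /tri => /existsP [[i a] /existsP [[j b] /existsP [[l d] /and3P [h1 h2 h3]]]].
    move: h1 h2 h3; rewrite !inE /=; unf.
    have := hB i; have := hB j; have := hB l; have := ht i; have := ht j; have := ht l.
    move: hs; brute.
Qed.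

Lemma tperm_eqR (T : finType) (u v x : T) : (tperm u v x == v) = (x == u).
Proof. by rewrite -[X in _ == X](tpermL u v) (inj_eq perm_inj). Qed.

Lemma FG_relabel p p' (pi : {perm 'I_k}) :
  pq p' = omap pi (pq p) -> (forall i, pt p' (pi i) = pt p i) -> graph_iso (FG p) (FG p').
Proof.
move=> hq ht.
pose f (x : V) := (pi x.1, tperm (pc p x.1) (pc p' (pi x.1)) x.2).
have finj : injective f.
  move=> [i a] [j b]; rewrite /f /= => -[/perm_inj eij]; subst j.
  by move/perm_inj ->.
apply/isoP; exists (perm finj) => -[i a] [j b].
rewrite !permE /f /FG !inE /adj /act /qadj /intra /= hq !ht (inj_eq perm_inj) !tperm_eqR.
case: (i =P j) => [eij|nij] /=.
- subst j; rewrite !(inj_eq perm_inj) !tperm_eqR; case: (pt p i) => //.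
- by case: (pq p) => //= s; rewrite !(inj_eq perm_inj).
Qed.

Lemma cntC_lt p s : pq p = Some s -> validS p -> cntC (pt p) < k.
Proof.
case: p => q t c /= -> [hs _]; rewrite /cntC.
have : [set i | isC (t i)] \proper [set: 'I_k].
  rewrite properT; apply/eqP => e; move: hs.
  by have := in_setT s; rewrite -e inE => ->.
by move/proper_card; rewrite cardsT card_ord.
Qed.

Lemma cntC_le (t : 'I_k -> ty) : cntC t <= k.
Proof. by rewrite /cntC; apply: leq_trans (max_card _) _; rewrite card_ord. Qed.

Lemma FG_iso p p' : valid p -> valid p' -> (pq p == None) = (pq p' == None) ->
  cntC (pt p) = cntC (pt p') -> graph_iso (FG p) (FG p').
Proof.
case: p => q t c; case: p' => q' t' c'; rewrite /valid /validS /par_ok /=.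
case: q => [s|]; case: q' => [s'|] //=.
- move=> [[hs ht] hp] [[hs' ht'] hp'] _ ec.
  pose X := [set i | isC (t i)]; pose Y := [set i | isC (t' i)].
  pose X0 := tperm s s' @: X.
  have mX0 z : (z \in X0) = (tperm s s' z \in X).
    by rewrite -{1}[z](tpermK s s') mem_imset //; apply: perm_inj.
  have cX : #|X0| = #|Y| by rewrite card_imset; [exact: ec | apply: perm_inj].
  have [pi' [h1 h2]] := perm_set cX.
  have ps' : pi' s' = s'.
    apply: h2; first by rewrite mX0 tpermR inE.
    by rewrite inE.
  apply: (@FG_relabel _ _ (tperm s s' * pi')%g) => /=; first by rewrite permM tpermL ps'.
  move=> i; rewrite permM.
  have hC : isC (t' (pi' (tperm s s' i))) = isC (t i).
    by have := h1 (tperm s s' i); rewrite mX0 tpermK !inE.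
  case: (i =P s) => [eis|nis]; first subst i.
  + rewrite tpermL ps'; rewrite tpermL ps' in hC.
    have eB : isB (t' s') = isB (t s).
      move: hp hp'; rewrite -ec !oddD.
      by case: (isB (t s)); case: (isB (t' s')); case: (odd (cntC t)).
    by move: hs hs' eB; case: (t s); case: (t' s').
  + have nis' : i != s by apply/eqP.
    have nj : pi' (tperm s s' i) != s'.
      rewrite -{2}ps' (inj_eq perm_inj) -{2}(tpermL s s') (inj_eq perm_inj) //.
    by move: (ht i nis') (ht' _ nj) hC; case: (t i); case: (t' _).
- move=> [hv hp] [hv' hp'] _ ec.
  have [pi [h1 _]] := @perm_set _ [set i | isC (t i)] [set i | isC (t' i)] ec.
  apply: (@FG_relabel _ _ pi) => //= i.
  have := h1 i; rewrite !inE.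
  by move: (hv i) (hv' (pi i)); case: (t i); case: (t' (pi i)).
Qed.

Section Reps.
Variables (z : 'I_k) (hz : val z = 0) (e : 'I_n).

Definition Srep (c : nat) := Par (Some z)
  (fun j => if j == z then (if odd c then TB else TA) else if (j <= c)%N then TC else TB)
  (fun _ => e).
Definition Krep (c : nat) := step (Srep c) (z, e).

Lemma validS_Srep c : validS (Srep c).
Proof.
rewrite /validS /=; split; first by rewrite eqxx; case: (odd c).
by move=> j /negbTE ->; case: (j <= c)%N.
Qed.


Lemma cnt_Srep c : c < k -> cntC (pt (Srep c)) = c.
Proof.
elim: c => [_|c IH hc].
- apply/eqP; rewrite cards_eq0; apply/eqP/setP => j; rewrite !inE.
  have [->|njz] := eqVneq j z; first by rewrite /= eqxx.
  rewrite /= (negbTE njz); case: (boolP (j <= 0)%N) => hj //=.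
  have ejz : j = z by apply: val_inj; rewrite hz; apply/eqP; rewrite -leqn0.
  by rewrite ejz eqxx in njz.
- have := @cnt_upd (pt (Srep c)) (pt (Srep c.+1)) (Ordinal hc).
  rewrite IH; last by lia.
  have lz : (Ordinal hc == z) = false by apply/eqP => /(congr1 val); rewrite hz.
  rewrite /= lz leqnn ltnn /= addn0 addn1 => -> //.
  move=> j /eqP nj /=; case: (j == z); first by case: (odd c).
  have : (val j != c.+1) by apply/eqP => ej; apply: nj; apply: val_inj.
  by rewrite leq_eqVlt ltnS => /negbTE ->.
Qed.

Lemma valid_Srep c : c < k -> valid (Srep c).
Proof.
move=> hc; split; first exact: validS_Srep.
rewrite /par_ok; have := cnt_Srep hc; rewrite /= eqxx => ->.
by rewrite oddD; case: (odd c).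
Qed.

Lemma Srep_orbit c : c < k -> FG (Srep c) \in lc_orbit (FG (p0 (fun _ => e))).
Proof.
elim: c => [_|c IH hc].
- have -> : FG (Srep 0) = FG (step (p0 (fun _ => e)) (z, e)).
    apply: FG_ext => //= j; case: (j =P z) => [//|njz].
    have : (val j != 0) by apply/eqP => ej; apply: njz; apply: val_inj; rewrite hz.
    by rewrite leqn0 => /negbTE ->.
  by rewrite -lc_FG //; apply: orbit_step; rewrite inE connect0.
- have lz : (Ordinal hc == z) = false by apply/eqP => /(congr1 val); rewrite hz.
  have -> : FG (Srep c.+1) = FG (step (Srep c) (Ordinal hc, e)).
    rewrite /step /= lz /= eqxx ltnn /=.
    apply: FG_ext => //= j; last by move=> _; case: (j == Ordinal hc).
    case: (j =P Ordinal hc) => [->|nj]; first by rewrite lz leqnn.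
    case: (j == z); first by case: (odd c).
    have : (val j != c.+1) by apply/eqP => ej; apply: nj; apply: val_inj.
    by rewrite leq_eqVlt ltnS => /negbTE ->.
  rewrite -lc_FG; last exact: validS_Srep.
  by apply: orbit_step; apply: IH; lia.
Qed.

Lemma Krep_orbit c : c < k -> FG (Krep c) \in lc_orbit (FG (p0 (fun _ => e))).
Proof.
move=> hc; rewrite /Krep -lc_FG; last exact: validS_Srep.
exact: orbit_step (Srep_orbit hc).
Qed.

Lemma valid_Krep c : c < k -> valid (Krep c).
Proof. by move=> hc; apply: valid_step (valid_Srep hc). Qed.

Lemma pq_Krep c : pq (Krep c) = None.
Proof. by rewrite /Krep /step /= eqxx. Qed.

Lemma cnt_Krep c : c < k -> cntC (pt (Krep c)) = c + odd c.
Proof.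
move=> hc.
have hs : forall j, j != z -> isC (pt (Krep c) j) = isC (pt (Srep c) j).
  by move=> j /negbTE hj; rewrite /Krep /step /= eqxx /= hj; case: (j <= c)%N.
move: (cnt_upd hs); rewrite (cnt_Srep hc) /Krep /step /= !eqxx /=.
by case: (odd c) => /=; rewrite ?eqxx /=; lia.
Qed.
End Reps.
End Fam.

Unset Implicit Arguments.

Theorem theorem15 (k n : nat) :
  3 <= k -> 2 <= n ->
  #|iso_classes (lc_orbit (complete_multipartite k n))| = k./2 + k + 1.
Proof.
move=> hk hn.
have hk0 : 0 < k by lia.
have hn0 : 0 < n by lia.
have hk' : 2 < k by lia.
have hn' : 1 < n by lia.
pose z := Ordinal hk0; pose e := Ordinal hn0.
have hz : val z = 0 by [].
rewrite (FG_p0 (fun _ => e)).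
pose m (j : 'I_(k./2).+1) := minn (2 * j) k.-1.
have hm j : m j < k by rewrite /m; lia.
have hk2 : 2 * k./2 <= k by rewrite mul2n -{2}(odd_double_half k) leq_addl.
have cntK (j : 'I_(k./2).+1) : cntC (pt (Krep z e (m j))) = 2 * j.
  rewrite cnt_Krep //.
  have hj : 2 * j <= k by have := ltn_ord j; lia.
  case: (leqP (2 * j) k.-1) => h.
  - have -> : m j = 2 * j by rewrite /m; lia.
    by rewrite mul2n odd_double addn0.
  - have ek : k = 2 * j by lia.
    have -> : m j = k.-1 by rewrite /m; lia.
    have : odd k = ~~ odd k.-1 by rewrite -oddS prednK.
    rewrite {1}ek mul2n odd_double => /esym/negbFE ->; lia.
pose R (i : ('I_(k./2).+1 + 'I_k)%type) :=
  match i with inl j => FG (Krep z e (m j)) | inr c => FG (Srep z e c) end.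
have invK j : inv (R (inl j)) = ((2 * j) * n.-1, false, true).
  have vK := valid_Krep hz e (hm j).
  have [h1 h2] := K_twtri (pq_Krep z e (m j)) vK.1 hk' hn'.
  by rewrite /inv /= (pend_FG vK.1) // cntK h1 h2.
have invS (c : 'I_k) : exists h, inv (R (inr c)) = (c * n.-1, h, h).
  have vS := valid_Srep hz e (ltn_ord c).
  have [h1 h2] := @S_twtri k n (Srep z e c) z (erefl _) vS.1 hk' hn'.
  exists [exists i, isB (pt (Srep z e c) i)].
  by rewrite /inv /= (pend_FG vS.1) // (cnt_Srep hz e (ltn_ord c)) h1 h2.
have hn1 : 0 < n.-1 by lia.
rewrite (@count_classes _ _ _ R).
- by rewrite card_sum !card_ord; lia.
- case => [j|c] /=; [apply: Krep_orbit | apply: Srep_orbit] => //.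
- move=> i1 i2 /inv_iso.
  case: i1 => [j1|c1]; case: i2 => [j2|c2].
  + rewrite !invK => -[] /eqP; rewrite eqn_pmul2r // => /eqP e12.
    by congr inl; apply: val_inj => /=; lia.
  + by have [h ->] := invS c2; rewrite invK => -[_ <- ].
  + by have [h ->] := invS c1; rewrite invK => -[_ -> ].
  + have [h1 ->] := invS c1; have [h2 ->] := invS c2.
    move=> -[] /eqP; rewrite eqn_pmul2r // => /eqP e12 *.
    by have -> : c1 = c2 by apply: val_inj.
- move=> H /(orbit_fam (valid_p0 _)) [p [vp ->]].
  case E: (pq p) => [s|].
  + exists (inr (Ordinal (cntC_lt E vp.1))) => /=.
    apply: (FG_iso vp (valid_Srep hz e (cntC_lt E vp.1))).
    * by rewrite E.
    * by rewrite (cnt_Srep hz e (cntC_lt E vp.1)).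
  + have hp : ~~ odd (cntC (pt p)) by move: vp => [_]; rewrite /par_ok E.
    have hj : (cntC (pt p))./2 < (k./2).+1 by rewrite ltnS half_leq // cntC_le.
    exists (inl (Ordinal hj)) => /=.
    apply: (FG_iso vp (valid_Krep hz e (hm _))).
    * by rewrite E pq_Krep.
    * rewrite cntK /= mul2n.
      by rewrite -{1}(odd_double_half (cntC (pt p))) (negbTE hp).
Qed.
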